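(* Let $L$ be a real Galois extension of $\mathbb{Q}$ with Galois group isomorphic to $\mathbb{Z}/2\mathbb{Z}\times\mathbb{Z}/2\mathbb{Z}$, let $u_1,u_2,u_3>1$ be the fundamental units of its three quadratic subfields, ordered so that $u_1<u_2<u_3$, and let $E=\{u_1^{m_1}u_2^{m_2}u_3^{m_3}:m_i\in\mathbb{Z}\}$. Put $X_1=\log u_2\log u_3$, $X_2=\log u_1\log u_3$, $X_3=\log u_1\log u_2$. For integers $n_1,n_2,n_3$ let $w=n_1\operatorname{LOG}(u_2)\wedge\operatorname{LOG}(u_3)+n_2\operatorname{LOG}(u_1)\wedge\operatorname{LOG}(u_3)+n_3\operatorname{LOG}(u_1)\wedge\operatorname{LOG}(u_2)$. Then $$\|w\|_1=4\big(\max\{|n_2X_2|,|n_3X_3|\}+\max\{|n_1X_1|,|n_2X_2|\}+\max\{|n_1X_1|,|n_3X_3|\}\big)\ge 8\max\{|n_1X_1|,|n_2X_2|,|n_3X_3|\},$$ and consequently every nonzero $w\in\bigwedge^2\operatorname{LOG}(E)$ satisfies $\|w\|_1\ge 8\log(u_1)\log(u_2)$.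
   Context: For a totally real number field $L$, $\operatorname{LOG}:\mathcal{O}_L^*\to\mathbb{R}^{\mathcal{A}_L}$, $\operatorname{LOG}(\gamma)=(\log|\tau(\gamma)|)_\tau$, indexed by the real embeddings $\tau$ of $L$. With the standard orthonormal basis $\{\delta^v\}$ of $\mathbb{R}^{\mathcal{A}_L}$ and $\delta^I=\delta^{v_1}\wedge\cdots\wedge\delta^{v_j}$ for $j$-subsets $I$, the 1-norm of $w=\sum_I c_I\delta^I\in\bigwedge^j\mathbb{R}^{\mathcal{A}_L}$ is $\|w\|_1=\sum_I|c_I|$. For a subgroup $H\subseteq\mathcal{O}_L^*$, $\bigwedge^2\operatorname{LOG}(H)$ is the subgroup generated by all $\operatorname{LOG}(a)\wedge\operatorname{LOG}(b)$ with $a,b\in H$. *)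

(* Defs.v *)
From HB Require Import structures.
From mathcomp Require Import all_boot all_order all_algebra all_fingroup all_field.
From mathcomp Require Import all_classical all_reals all_analysis.
Set Implicit Arguments. Unset Strict Implicit. Unset Printing Implicit Defensive.
Import Order.TTheory GRing.Theory Num.Theory.
Local Open Scope ring_scope.

Definition is_alg_int (L : fieldExtType rat) (x : L) : Prop :=
  exists p : {poly int}, p \is monic /\ root (map_poly (intr : int -> L) p) x.

Definition is_OK_unit (L : fieldExtType rat) (K : {subfield L}) (x : L) : Prop :=
  [/\ x \in K, x != 0, is_alg_int x & is_alg_int x^-1].

Definition fundamental_unit (R : realType) (L : fieldExtType rat)
    (iota : {rmorphism L -> R}) (K : {subfield L}) (u : L) : Prop :=
  [/\ is_OK_unit K u, 1 < iota u &
      forall v, is_OK_unit K v -> exists (m : int) (b : bool), v = (-1) ^+ b * u ^ m].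

Definition LOG (R : realType) (L : fieldExtType rat) (n : nat)
    (tau : 'I_n -> {rmorphism L -> R}) (g : L) : 'I_n -> R :=
  fun i => ln `|tau i g|.

(* elements of /\^2 R^n represented by their (antisymmetric) coefficient
   function on pairs (i,j); the coefficient of delta^{i} /\ delta^{j}, i<j, is w i j *)
Definition wedge (R : realType) (n : nat) (a b : 'I_n -> R) : 'I_n -> 'I_n -> R :=
  fun i j => a i * b j - a j * b i.

Definition wnorm1 (R : realType) (n : nat) (w : 'I_n -> 'I_n -> R) : R :=
  \sum_(i < n) \sum_(j < n | (i < j)%N) `|w i j|.

Definition wedge2_LOG (R : realType) (L : fieldExtType rat) (n : nat)
    (tau : 'I_n -> {rmorphism L -> R}) (H : L -> Prop) (w : 'I_n -> 'I_n -> R) : Prop :=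
  exists s : seq (int * L * L),
    (forall t, t \in s -> H t.1.2 /\ H t.2) /\
    w = (fun i j => \sum_(t <- s) t.1.1%:~R * wedge (LOG tau t.1.2) (LOG tau t.2) i j).

(* Main.v *)
Require Import Defs.
From HB Require Import structures.
From mathcomp Require Import all_boot all_order all_algebra all_fingroup all_field.
From mathcomp Require Import ring lra zify.
From mathcomp Require Import all_classical all_reals all_analysis.
Import Order.TTheory GRing.Theory Num.Theory.
Local Open Scope ring_scope.
Set Implicit Arguments. Unset Strict Implicit.
Lemma mem1_rat (L : fieldExtType rat) (x : L) : x \in 1%VS -> exists r : rat, x = r%:A.
Proof. by case/vlineP=> k ->; exists k. Qed.

Lemma rat_alg_int (L : fieldExtType rat) (r : rat) :
  is_alg_int (r%:A : L) -> exists z : int, r = z%:~R.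
Proof.
case=> p [mp rp].
have rq : root (map_poly (intr : int -> rat) p) r.
  rewrite -(fmorph_root (in_alg L)) -map_poly_comp.
  rewrite (eq_map_poly (g := intr)) //= => z; exact: rmorph_int.
have rc : root (map_poly (intr : int -> algC) p) (ratr r).
  rewrite -(fmorph_root (ratr : {rmorphism rat -> algC})) in rq.
  by rewrite -map_poly_comp (eq_map_poly (g := intr)) in rq => // z /=; rewrite rmorph_int.
have : ratr r \in Aint.
  apply: (root_monic_Aint rc); first exact: monic_map.
  by apply/polyOverP=> i; rewrite coef_map /= rpred_int.
move/(Cint_rat_Aint (Crat_rat r))/intrP=> [z hz].
exists z; apply: (fmorph_inj (ratr : {rmorphism rat -> algC})).
by rewrite /= hz rmorph_int.
Qed.

Lemma alg_int_integral (L : fieldExtType rat) (x : L) :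
  is_alg_int x <-> integralOver (intr : int -> L) x.
Proof. by split=> [[p [m r]]|[p m r]]; exists p. Qed.

Lemma alg_int_mul (L : fieldExtType rat) (x y : L) :
  is_alg_int x -> is_alg_int y -> is_alg_int (x * y).
Proof.
move=> /alg_int_integral hx /alg_int_integral hy; apply/alg_int_integral.
exact: (integral_mul (RtoK := intr) hx hy).
Qed.

Lemma alg_int_gal (L : splittingFieldType rat) (g : gal_of {:L}) (x : L) :
  is_alg_int x -> is_alg_int (g x).
Proof.
case=> p [m r]; exists p; split=> //.
have := rmorph_root (g : {rmorphism L -> L}) r.
rewrite -map_poly_comp (eq_map_poly (g := intr)) // => z /=; exact: rmorph_int.
Qed.

Lemma rat_unit_abs (L : fieldExtType rat) (R : realType) (f : {rmorphism L -> R}) (x : L) :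
  x \in 1%VS -> x != 0 -> is_alg_int x -> is_alg_int x^-1 -> `|f x| = 1.
Proof.
move=> /mem1_rat [r ->] nz hx hxi.
have hr : r != 0 by apply: contraNneq nz => ->; rewrite scale0r.
have [z hz] := rat_alg_int hx.
have : is_alg_int ((r^-1)%:A : L).
  by rewrite -in_algE fmorphV.
move=> /rat_alg_int [z' hz'].
have e : z * z' = 1.
  apply: (intr_inj (R := rat)); rewrite rmorphM /= -hz -hz' mulfV //.
have hz1 : `|z| = 1.
  have := @intUnitRing.unitzPl z z'; rewrite mulrC e => /(_ erefl).
  by rewrite qualifE /= => /orP[]/eqP->.
rewrite alg_num_field fmorph_rat hz ratr_int -intr_norm hz1 //.
Qed.

Section GroupFacts.
Local Open Scope group_scope.
Lemma card2_group (gT : finGroupType) (H : {group gT}) :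
  #|H| = 2%N -> exists h, h != 1 /\ (H : {set gT}) = [set 1; h].
Proof.
move/eqP/cards2P=> [a [b [ab eH]]].
have : 1 \in H by exact: group1.
rewrite eH !inE => /orP[]/eqP e.
  by exists b; split; [rewrite e eq_sym | rewrite e].
by exists a; split; [rewrite e | rewrite e finset.setUC].
Qed.

Lemma sq1 (gT : finGroupType) (H : {group gT}) h :
  h != 1 -> (H : {set gT}) = [set 1; h] -> h * h = 1.
Proof.
move=> h1 eH; have : h * h \in H by rewrite groupM // eH !inE eqxx ?orbT.
rewrite eH !inE => /orP[]/eqP // e.
have h0 : h = 1 by rewrite -[LHS](mulgK h) e mulgV.
by rewrite h0 eqxx in h1.
Qed.

Lemma prod3 (gT : finGroupType) (a b c : gT) :
  (forall x, [\/ x = 1, x = a, x = b | x = c]) ->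
  a != 1 -> b != 1 -> a != b -> a * a = 1 -> a * b = c.
Proof.
move=> all a1 b1 ab aa.
have bE : b = a * (a * b) by rewrite mulgA aa mul1g.
case: (all (a * b)) => // e.
- by move: ab; rewrite bE e mulg1 eqxx.
- by move: b1; rewrite bE e aa eqxx.
- have a0 : a = 1 by rewrite -[LHS](mulgK b) e mulgV.
  by rewrite a0 eqxx in a1.
Qed.
End GroupFacts.

Section GalScope.
Local Open Scope group_scope.
Section GalStuff.
Variables (L : splittingFieldType rat).
Hypothesis Lgal : galois 1%VS {:L}.
Hypothesis Gal22 : ('Gal({:L} / 1%VS) \isog [set: 'Z_2 * 'Z_2])%g.

Lemma gal_all (g : gal_of {:L}) : g \in 'Gal({:L} / 1%VS).
Proof. by rewrite gal_kHom ?sub1v // k1HomE; exact: ahomWin. Qed.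

Lemma card_gal4 : #|'Gal({:L} / 1%VS)| = 4%N.
Proof. by rewrite (card_isog Gal22) cardsT card_prod card_ord. Qed.

Lemma galT : 'Gal({:L} / 1%VS) = [set: gal_of {:L}].
Proof. by apply/setP => g; rewrite inE gal_all. Qed.

Lemma dim_full : \dim {:L} = 4%N.
Proof. by have := galois_dim Lgal; rewrite dimv1 divn1 card_gal4. Qed.

Lemma card_galK (K : {subfield L}) : \dim K = 2%N -> #|'Gal({:L} / K)| = 2%N.
Proof.
move=> dK; have gK : galois K {:L} by apply: galoisS Lgal; rewrite sub1v subvf.
by rewrite -(galois_dim gK) dim_full dK.
Qed.

Lemma galK_inj (K1 K2 : {subfield L}) : K1 != K2 -> 'Gal({:L} / K1) != 'Gal({:L} / K2).
Proof.
move=> ne; apply: contra ne => /eqP e.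
have g1 : galois K1 {:L} by apply: galoisS Lgal; rewrite sub1v subvf.
have g2 : galois K2 {:L} by apply: galoisS Lgal; rewrite sub1v subvf.
have h1 := galois_fixedField g1; have h2 := galois_fixedField g2.
rewrite e h2 in h1; apply/eqP/val_inj => /=; exact: esym h1.
Qed.

Lemma fixed_all_rat (a : L) : (forall g : gal_of {:L}, g a = a) -> a \in 1%VS.
Proof.
move=> h; rewrite -(galois_fixedField Lgal); apply/fixedFieldP; first exact: memvf.
by move=> g _; exact: h.
Qed.
End GalStuff.
End GalScope.

Lemma ln_unit_conj (R : realType) (L : splittingFieldType rat)
  (Lgal : galois 1%VS {:L}) (iota : {rmorphism L -> R})
  (p q r : gal_of {:L}) (a : L) :
  (forall x, [\/ x = 1%g, x = p, x = q | x = r]) -> p a = a ->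
  (q * q = 1)%g -> (p * q = r)%g -> (q * p = r)%g -> (q * r = p)%g ->
  a != 0 -> is_alg_int a -> is_alg_int a^-1 ->
  ln `|iota (q a)| = - ln `|iota a|.
Proof.
move=> all pa qq pq qp qr a0 ia iai.
have ra : r a = q a by rewrite -pq galM ?memvf // pa.
have gM (x : gal_of {:L}) u v : x (u * v) = x u * x v by exact: (rmorphM (x : {rmorphism L -> L})).
have gq (x : gal_of {:L}) : x (q a) = (q * x)%g a by rewrite galM ?memvf.
have fixb : forall x : gal_of {:L}, x (a * q a) = a * q a.
  move=> x; rewrite gM gq; case: (all x) => ->.
  - by rewrite gal_id mulg1.
  - by rewrite qp pa ra.
  - by rewrite qq gal_id mulrC.
  - by rewrite qr pa ra mulrC.
have qa0 : q a != 0 by rewrite (fmorph_eq0 (q : {rmorphism L -> L})).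
have b1 : `|iota (a * q a)| = 1.
  apply: rat_unit_abs.
  - apply: fixed_all_rat => //.
  - by rewrite mulf_neq0.
  - by apply: alg_int_mul => //; apply: alg_int_gal.
  - rewrite invfM -(fmorphV (q : {rmorphism L -> L})).
    by apply: alg_int_mul => //; apply: alg_int_gal.
have ia0 : `|iota a| \is Num.pos by rewrite posrE normr_gt0 fmorph_eq0.
have iq0 : `|iota (q a)| \is Num.pos by rewrite posrE normr_gt0 fmorph_eq0.
have := congr1 (@ln R) b1; rewrite rmorphM normrM lnM // ln1 => /eqP.
by rewrite addr_eq0 => /eqP ->; rewrite opprK.
Qed.

Section Emb.
Variables (R : realType) (L : splittingFieldType rat) (iota : {rmorphism L -> R}).
Hypothesis Lgal : galois 1%VS {:L}.
Hypothesis Gal22 : ('Gal({:L} / 1%VS) \isog [set: 'Z_2 * 'Z_2])%g.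

Let z := separable_generator 1%AS {:L}%AS.

Lemma full_adj : <<1%VS; z>>%VS = {:L}%VS.
Proof.
have /and3P[_ sep _] := Lgal.
by rewrite /z -(@eq_adjoin_separable_generator _ _ {:L}%AS 1%AS) ?sub1v.
Qed.

Lemma rat_coef (f : {rmorphism L -> R}) c : c \in 1%VS -> f c = iota c.
Proof. by case/mem1_rat=> r ->; rewrite alg_num_field !fmorph_rat. Qed.

Lemma map_rat_poly (f : {rmorphism L -> R}) (p : {poly L}) :
  p \is a polyOver 1%VS -> map_poly f p = map_poly iota p.
Proof.
move/polyOverP=> h; apply/polyP=> i; by rewrite !coef_map /= rat_coef.
Qed.

Lemma emb_det (f : {rmorphism L -> R}) (g : gal_of {:L}) :
  f z = iota (g z) -> forall x, f x = iota (g x).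
Proof.
move=> e x.
have xz : x \in <<1%VS; z>>%VS by rewrite full_adj memvf.
rewrite -(Fadjoin_poly_eq xz).
set p := Fadjoin_poly _ _ _.
have pO : p \is a polyOver 1%VS by exact: Fadjoin_polyOver.
rewrite -horner_map e map_rat_poly //.
rewrite -[g p.[z]](horner_map (g : {rmorphism L -> L})).
rewrite (fixedPoly_gal (sub1v _) (gal_all g) pO).
by rewrite horner_map.
Qed.

Lemma gal_inj_z (g g' : gal_of {:L}) : iota (g z) = iota (g' z) -> g = g'.
Proof.
move=> e; apply/eqP/gal_eqP => x _; apply: (fmorph_inj iota).
exact: (emb_det (f := iota \o (g : {rmorphism L -> L})) (g := g') e x).
Qed.

Lemma emb_gal (f : {rmorphism L -> R}) : exists g : gal_of {:L}, forall x, f x = iota (g x).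
Proof.
suff [g /eqP hg] : exists g : gal_of {:L}, f z == iota (g z) by exists g; apply: emb_det.
apply/existsP; apply: contraT => /negP ne.
set q := map_poly iota (minPoly 1%VS z).
have q0 : q != 0 by rewrite map_poly_eq0 monic_neq0 ?monic_minPoly.
have sq : size q = 5%N.
  by rewrite size_map_poly size_minPoly adjoin_degreeE full_adj dimv1 divn1 dim_full.
set s := f z :: [seq iota ((g : gal_of {:L}) z) | g <- enum [set: gal_of {:L}]].
have ss : size s = 5%N by rewrite /= size_map -cardE -galT card_gal4.
have := @max_poly_roots _ q s q0.
rewrite ss sq ltnn; apply.
  rewrite /= andbC; apply/andP; split.
    apply/allP=> _ /mapP[g _ ->]; rewrite /q rmorph_root //.
    by apply: root_minPoly_gal; rewrite ?sub1v ?gal_all ?memvf.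
  by rewrite /q -(map_rat_poly f (minPolyOver _ _)) rmorph_root // root_minPoly.
rewrite /= map_inj_uniq ?enum_uniq ?andbT; last by move=> g g'; apply: gal_inj_z.
apply/mapP=> -[g _ e]; apply: ne; apply/existsP; exists g; exact/eqP.
Qed.
End Emb.

Lemma abs_pm (R : realDomainType) (x y : R) : `|x + y| + `|x - y| = 2 * Num.max `|x| `|y|.
Proof.
have nx := normr_ge0 x.
case: (lerP 0 x) => hx; [rewrite (ger0_norm hx) | rewrite (ltr0_norm hx)];
case: (lerP 0 y) => hy; [rewrite (ger0_norm hy) | rewrite (ltr0_norm hy) |rewrite (ger0_norm hy) | rewrite (ltr0_norm hy)];
case: (lerP 0 (x + y)) => hxy; rewrite ?(ger0_norm hxy) ?(ltr0_norm hxy);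
case: (lerP 0 (x - y)) => hxy'; rewrite ?(ger0_norm hxy') ?(ltr0_norm hxy');
rewrite /Num.max; case: ifP => /= h; lra.
Qed.

Definition Phi0 (R : nzRingType) (N1 N2 N3 : R) (x y : R * R * R) : R :=
  N1 * (x.1.2 * y.2 - y.1.2 * x.2) + N2 * (x.1.1 * y.2 - y.1.1 * x.2)
  + N3 * (x.1.1 * y.1.2 - y.1.1 * x.1.2).
Arguments Phi0 {R}.

Lemma arith (R : realFieldType) (a1 a2 a3 N1 N2 N3 : R) :
  let v := [:: (a1, a2, a3); (a1, -a2, -a3); (-a1, a2, -a3); (-a1, -a2, a3)] in
  \sum_(x <- v) \sum_(y <- v) `|Phi0 N1 N2 N3 x y|
  = 8 * (Num.max `|N2 * (a1 * a3)| `|N3 * (a1 * a2)|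
         + Num.max `|N1 * (a2 * a3)| `|N2 * (a1 * a3)|
         + Num.max `|N1 * (a2 * a3)| `|N3 * (a1 * a2)|).
Proof.
move=> v.
set P := N1 * (a2 * a3); set Q := N2 * (a1 * a3); set S := N3 * (a1 * a2).
have e00 : Phi0 N1 N2 N3 (a1, a2, a3) (a1, a2, a3) = 0 by rewrite /Phi0 /P /Q /S /=; ring.
have e01 : Phi0 N1 N2 N3 (a1, a2, a3) (a1, -a2, -a3) = -(2*(Q+S)) by rewrite /Phi0 /P /Q /S /=; ring.
have e02 : Phi0 N1 N2 N3 (a1, a2, a3) (-a1, a2, -a3) = -(2*(P-S)) by rewrite /Phi0 /P /Q /S /=; ring.
have e03 : Phi0 N1 N2 N3 (a1, a2, a3) (-a1, -a2, a3) = 2*(P+Q) by rewrite /Phi0 /P /Q /S /=; ring.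
have e10 : Phi0 N1 N2 N3 (a1, -a2, -a3) (a1, a2, a3) = -(-(2*(Q+S))) by rewrite /Phi0 /P /Q /S /=; ring.
have e11 : Phi0 N1 N2 N3 (a1, -a2, -a3) (a1, -a2, -a3) = 0 by rewrite /Phi0 /P /Q /S /=; ring.
have e12 : Phi0 N1 N2 N3 (a1, -a2, -a3) (-a1, a2, -a3) = 2*(P-Q) by rewrite /Phi0 /P /Q /S /=; ring.
have e13 : Phi0 N1 N2 N3 (a1, -a2, -a3) (-a1, -a2, a3) = -(2*(P+S)) by rewrite /Phi0 /P /Q /S /=; ring.
have e20 : Phi0 N1 N2 N3 (-a1, a2, -a3) (a1, a2, a3) = -(-(2*(P-S))) by rewrite /Phi0 /P /Q /S /=; ring.
have e21 : Phi0 N1 N2 N3 (-a1, a2, -a3) (a1, -a2, -a3) = -(2*(P-Q)) by rewrite /Phi0 /P /Q /S /=; ring.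
have e22 : Phi0 N1 N2 N3 (-a1, a2, -a3) (-a1, a2, -a3) = 0 by rewrite /Phi0 /P /Q /S /=; ring.
have e23 : Phi0 N1 N2 N3 (-a1, a2, -a3) (-a1, -a2, a3) = -(2*(Q-S)) by rewrite /Phi0 /P /Q /S /=; ring.
have e30 : Phi0 N1 N2 N3 (-a1, -a2, a3) (a1, a2, a3) = -(2*(P+Q)) by rewrite /Phi0 /P /Q /S /=; ring.
have e31 : Phi0 N1 N2 N3 (-a1, -a2, a3) (a1, -a2, -a3) = -(-(2*(P+S))) by rewrite /Phi0 /P /Q /S /=; ring.
have e32 : Phi0 N1 N2 N3 (-a1, -a2, a3) (-a1, a2, -a3) = -(-(2*(Q-S))) by rewrite /Phi0 /P /Q /S /=; ring.
have e33 : Phi0 N1 N2 N3 (-a1, -a2, a3) (-a1, -a2, a3) = 0 by rewrite /Phi0 /P /Q /S /=; ring.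
rewrite /v !big_cons !big_nil /= e00 e01 e02 e03 e10 e11 e12 e13 e20 e21 e22 e23 e30 e31 e32 e33.
rewrite !(normr0, normrN) !(normrM 2) (ger0_norm (ler0n _ 2)).
have h1 := @abs_pm _ Q S; have h2 := @abs_pm _ P S; have h3 := @abs_pm _ P Q.
lra.
Qed.

Lemma max_ineq (R : realDomainType) (P Q S : R) :
  8 * Num.max `|P| (Num.max `|Q| `|S|) <=
  4 * (Num.max `|Q| `|S| + Num.max `|P| `|Q| + Num.max `|P| `|S|).
Proof.
have := normr_ge0 P; have := normr_ge0 Q; have := normr_ge0 S.
move: `|P| `|Q| `|S| => p q s hs hq hp.
rewrite /Num.max; repeat case: ifP => /= ?; lra.
Qed.

Lemma wnorm1_sym (R : realType) (n : nat) (w : 'I_n -> 'I_n -> R) :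
  (forall i j, w j i = - w i j) ->
  wnorm1 w * 2 = \sum_i \sum_j `|w i j|.
Proof.
move=> anti.
have split_ij i j : `|w i j| = (if (i < j)%N then `|w i j| else 0) + (if (j < i)%N then `|w j i| else 0).
  case: (ltngtP i j) => h.
  - by rewrite addr0.
  - by rewrite add0r anti normrN.
  - have e : i = j := val_inj h; subst j.
    have w0 : w i i = 0 by have := anti i i; lra.
    by rewrite w0 normr0 addr0.
under eq_bigr do under eq_bigr do rewrite split_ij.
under eq_bigr do rewrite big_split.
rewrite big_split /=.
rewrite [X in _ = _ + X]exchange_big /=.
have -> : wnorm1 w = \sum_(i < n) \sum_(j < n) (if (i < j)%N then `|w i j| else 0).
  by rewrite /wnorm1; apply: eq_bigr => i _; rewrite big_mkcond.
lra.
Qed.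

Lemma sum_enum4 (R : realType) (T : finType) (a b c d : T) (F : T -> R) :
  uniq [:: a; b; c; d] -> (forall x, x \in [:: a; b; c; d]) ->
  \sum_(x : T) F x = \sum_(x <- [:: a; b; c; d]) F x.
Proof.
move=> u h; apply: perm_big; apply: uniq_perm => //; first exact: index_enum_uniq.
by move=> x; rewrite mem_index_enum h.
Qed.

Lemma reindex2 (R : realType) (T : finType) (n : nat) (G : 'I_n -> T) (F : T -> T -> R) :
  bijective G -> \sum_i \sum_j F (G i) (G j) = \sum_(x : T) \sum_(y : T) F x y.
Proof.
move=> bG; rewrite (reindex G (onW_bij _ bG)); apply: eq_bigr => i _.
by rewrite (reindex G (onW_bij _ bG)).
Qed.

Lemma ln_expz (R : realType) (L : fieldType) (f : {rmorphism L -> R}) (x : L) (m : int) :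
  x != 0 -> ln `|f (x ^ m)| = m%:~R * ln `|f x|.
Proof.
move=> x0; have hx : 0 < `|f x| by rewrite normr_gt0 fmorph_eq0.
case: m => k.
- by rewrite /exprz rmorphXn normrX lnXn // mulrC mulrzr pmulrn.
- rewrite NegzE /exprz fmorphV rmorphXn normrV ?unitfE ?expf_neq0 ?fmorph_eq0 //.
  rewrite normrX lnV ?posrE ?exprn_gt0 // lnXn //.
  by rewrite mulrC mulrzr mulrNz pmulrn.
Qed.

Lemma LOG_E (R : realType) (L : fieldExtType rat) (n : nat) (tau : 'I_n -> {rmorphism L -> R})
  (u1 u2 u3 : L) (m1 m2 m3 : int) i :
  u1 != 0 -> u2 != 0 -> u3 != 0 ->
  LOG tau (u1 ^ m1 * u2 ^ m2 * u3 ^ m3) i =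
  m1%:~R * LOG tau u1 i + m2%:~R * LOG tau u2 i + m3%:~R * LOG tau u3 i.
Proof.
move=> h1 h2 h3; rewrite /LOG !rmorphM !normrM.
have p (u : L) (m : int) : u != 0 -> `|tau i (u ^ m)| \is Num.pos.
  by move=> hu; rewrite posrE normr_gt0 fmorph_eq0 expfz_neq0.
rewrite !lnM ?p // ?posrE ?mulr_gt0 -?posrE ?p //.
by rewrite !ln_expz.
Qed.

Lemma decomp (R : realType) (L : fieldExtType rat) (n : nat) (tau : 'I_n -> {rmorphism L -> R})
  (u1 u2 u3 : L) (w : 'I_n -> 'I_n -> R) :
  u1 != 0 -> u2 != 0 -> u3 != 0 ->
  wedge2_LOG tau (fun x : L => exists m1 m2 m3 : int, x = u1 ^ m1 * u2 ^ m2 * u3 ^ m3) w ->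
  exists n1 n2 n3 : int, w = (fun i j =>
       n1%:~R * wedge (LOG tau u2) (LOG tau u3) i j
       + n2%:~R * wedge (LOG tau u1) (LOG tau u3) i j
       + n3%:~R * wedge (LOG tau u1) (LOG tau u2) i j).
Proof.
move=> h1 h2 h3 [s [hs ->]].
suff [n1 [n2 [n3 H]]] : exists n1 n2 n3 : int, forall i j,
  \sum_(t <- s) (t.1.1)%:~R * wedge (LOG tau t.1.2) (LOG tau t.2) i j =
       n1%:~R * wedge (LOG tau u2) (LOG tau u3) i j
       + n2%:~R * wedge (LOG tau u1) (LOG tau u3) i j
       + n3%:~R * wedge (LOG tau u1) (LOG tau u2) i j.
  by exists n1, n2, n3; apply/funext => i; apply/funext => j; apply: H.
elim: s hs => [|t s IH] hs.
  by exists 0, 0, 0 => i j; rewrite big_nil !mul0r !addr0.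
have [|n1 [n2 [n3 H]]] := IH.
  by move=> t' ht'; apply: hs; rewrite inE ht' orbT.
have [[m1 [m2 [m3 ea]]] [k1 [k2 [k3 eb]]]] := hs t (mem_head _ _).
exists (t.1.1 * (m2 * k3 - m3 * k2) + n1), (t.1.1 * (m1 * k3 - m3 * k1) + n2),
  (t.1.1 * (m1 * k2 - m2 * k1) + n3) => i j.
rewrite big_cons H /wedge ea eb !LOG_E //.
rewrite !(rmorphD, rmorphM, rmorphB) /=.
ring.
Qed.

Unset Implicit Arguments. Set Strict Implicit.

Lemma in4 (T : eqType) (a b c d x : T) : x \in [:: a; b; c; d] -> [\/ x = a, x = b, x = c | x = d].
Proof. by rewrite !inE => /or4P[]/eqP; [constructor 1|constructor 2|constructor 3|constructor 4]. Qed.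

Lemma int_ge (R : realDomainType) (m : int) (X : R) : 0 <= X -> m != 0 -> X <= `|m%:~R * X|.
Proof.
move=> hX m0; rewrite normrM (ger0_norm hX).
have h1 : (1 <= `|m|)%R by lia.
have : (1 : R) <= `|m%:~R : R| by rewrite -intr_norm ler1z.
move=> h; rewrite -[X in X <= _]mul1r; apply: ler_wpM2r => //.
Qed.

Lemma half_eq (R : realFieldType) (x M : R) : x * 2 = 8 * M -> x = 4 * M.
Proof. move=> h; lra. Qed.

Theorem mainTheorem5 (R : realType) (L : splittingFieldType rat)
    (iota : {rmorphism L -> R})
    (n : nat) (tau : 'I_n -> {rmorphism L -> R})
    (tau_inj : forall i j : 'I_n, i != j -> exists x : L, tau i x != tau j x)
    (tau_all : forall f : {rmorphism L -> R}, exists i : 'I_n, forall x : L, f x = tau i x)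
    (Lgal : galois 1%VS {:L})
    (Gal22 : ('Gal({:L} / 1%VS) \isog [set: 'Z_2 * 'Z_2])%g)
    (K1 K2 K3 : {subfield L})
    (dimK1 : \dim K1 = 2%N) (dimK2 : \dim K2 = 2%N) (dimK3 : \dim K3 = 2%N)
    (K12 : K1 != K2) (K13 : K1 != K3) (K23 : K2 != K3)
    (u1 u2 u3 : L)
    (fu1 : fundamental_unit iota K1 u1) (fu2 : fundamental_unit iota K2 u2)
    (fu3 : fundamental_unit iota K3 u3)
    (u12 : iota u1 < iota u2) (u23 : iota u2 < iota u3) :
  let E := fun x : L => exists m1 m2 m3 : int, x = u1 ^ m1 * u2 ^ m2 * u3 ^ m3 in
  let X1 := ln (iota u2) * ln (iota u3) in
  let X2 := ln (iota u1) * ln (iota u3) in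
  let X3 := ln (iota u1) * ln (iota u2) in
  (forall n1 n2 n3 : int,
     let w := fun i j =>
       n1%:~R * wedge (LOG tau u2) (LOG tau u3) i j
       + n2%:~R * wedge (LOG tau u1) (LOG tau u3) i j
       + n3%:~R * wedge (LOG tau u1) (LOG tau u2) i j in
     wnorm1 w = 4 * (Num.max `|n2%:~R * X2| `|n3%:~R * X3|
                    + Num.max `|n1%:~R * X1| `|n2%:~R * X2|
                    + Num.max `|n1%:~R * X1| `|n3%:~R * X3|)
     /\ 8 * Num.max `|n1%:~R * X1| (Num.max `|n2%:~R * X2| `|n3%:~R * X3|) <= wnorm1 w)
  /\
  (forall w : 'I_n -> 'I_n -> R, wedge2_LOG tau E w -> w <> (fun _ _ => 0) ->
     8 * (ln (iota u1) * ln (iota u2)) <= wnorm1 w).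
Proof.
move=> E X1 X2 X3.
case: fu1 => [[u1K u10 iu1 iu1i] gt1 _].
case: fu2 => [[u2K u20 iu2 iu2i] gt2 _].
case: fu3 => [[u3K u30 iu3 iu3i] gt3 _].
set a1 := ln (iota u1); set a2 := ln (iota u2); set a3 := ln (iota u3).
have a1p : 0 < a1 by apply: ln_gt0.
have p1 : 0 < iota u1 by apply: lt_trans gt1.
have p2 : 0 < iota u2 by apply: lt_trans gt2.
have p3 : 0 < iota u3 by apply: lt_trans gt3.
have a12 : a1 < a2 by rewrite /a1 /a2 ltr_ln ?posrE.
have a23 : a2 < a3 by rewrite /a3 /a2 ltr_ln ?posrE.
have [h1 [h1n eH1]] := card2_group (H := ('Gal({:L} / K1))%G) (card_galK Lgal Gal22 dimK1).
have [h2 [h2n eH2]] := card2_group (H := ('Gal({:L} / K2))%G) (card_galK Lgal Gal22 dimK2).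
have [h3 [h3n eH3]] := card2_group (H := ('Gal({:L} / K3))%G) (card_galK Lgal Gal22 dimK3).
have d12 : h1 != h2.
  apply: contra (galK_inj Lgal K12) => /eqP e; apply/eqP.
  by rewrite [LHS]eH1 [RHS]eH2 e.
have d13 : h1 != h3.
  apply: contra (galK_inj Lgal K13) => /eqP e; apply/eqP.
  by rewrite [LHS]eH1 [RHS]eH3 e.
have d23 : h2 != h3.
  apply: contra (galK_inj Lgal K23) => /eqP e; apply/eqP.
  by rewrite [LHS]eH2 [RHS]eH3 e.
have us : uniq [:: 1%g; h1; h2; h3].
  by rewrite /= !inE !negb_or ![1%g == _]eq_sym h1n h2n h3n d12 d13 d23.
have all4 : forall x : gal_of {:L}, x \in [:: 1%g; h1; h2; h3].
  move=> x; apply: contraT => nx.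
  have : uniq (x :: [:: 1%g; h1; h2; h3]) by rewrite cons_uniq nx us.
  move/(@uniq_leq_size _ _ (enum [set: gal_of {:L}])).
  rewrite -cardE -galT (card_gal4 Gal22) ltnn; apply => y _.
  by rewrite mem_enum gal_all.
have m123 : forall x : gal_of {:L}, [\/ x = 1%g, x = h1, x = h2 | x = h3].
  by move=> x; case: (@in4 _ _ _ _ _ _ (all4 x)) => ->; [constructor 1|constructor 2|constructor 3|constructor 4].
have m213 : forall x : gal_of {:L}, [\/ x = 1%g, x = h2, x = h1 | x = h3].
  by move=> x; case: (@in4 _ _ _ _ _ _ (all4 x)) => ->; [constructor 1|constructor 3|constructor 2|constructor 4].
have m132 : forall x : gal_of {:L}, [\/ x = 1%g, x = h1, x = h3 | x = h2].
  by move=> x; case: (@in4 _ _ _ _ _ _ (all4 x)) => ->; [constructor 1|constructor 2|constructor 4|constructor 3].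
have m312 : forall x : gal_of {:L}, [\/ x = 1%g, x = h3, x = h1 | x = h2].
  by move=> x; case: (@in4 _ _ _ _ _ _ (all4 x)) => ->; [constructor 1|constructor 3|constructor 4|constructor 2].
have m231 : forall x : gal_of {:L}, [\/ x = 1%g, x = h2, x = h3 | x = h1].
  by move=> x; case: (@in4 _ _ _ _ _ _ (all4 x)) => ->; [constructor 1|constructor 4|constructor 2|constructor 3].
have m321 : forall x : gal_of {:L}, [\/ x = 1%g, x = h3, x = h2 | x = h1].
  by move=> x; case: (@in4 _ _ _ _ _ _ (all4 x)) => ->; [constructor 1|constructor 4|constructor 3|constructor 2].
have d21 : h2 != h1 by rewrite eq_sym.
have d31 : h3 != h1 by rewrite eq_sym.
have d32 : h3 != h2 by rewrite eq_sym.
have s1 := sq1 h1n eH1; have s2 := sq1 h2n eH2; have s3 := sq1 h3n eH3.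
have p12 := prod3 m123 h1n h2n d12 s1.
have p21 := prod3 m213 h2n h1n d21 s2.
have p13 := prod3 m132 h1n h3n d13 s1.
have p31 := prod3 m312 h3n h1n d31 s3.
have p23 := prod3 m231 h2n h3n d23 s2.
have p32 := prod3 m321 h3n h2n d32 s3.
have fix1 : h1 u1 = u1.
  by apply: (fixed_gal (subvf K1)) u1K; rewrite eH1 in_set2 eqxx orbT.
have fix2 : h2 u2 = u2.
  by apply: (fixed_gal (subvf K2)) u2K; rewrite eH2 in_set2 eqxx orbT.
have fix3 : h3 u3 = u3.
  by apply: (fixed_gal (subvf K3)) u3K; rewrite eH3 in_set2 eqxx orbT.
have nu1 : `|iota u1| = iota u1 by rewrite ger0_norm ?(ltW p1).
have v11 : ln `|iota ((1%g : gal_of {:L}) u1)| = a1 by rewrite gal_id nu1.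
have vh11 : ln `|iota (h1 u1)| = a1 by rewrite fix1 nu1.
have nu2 : `|iota u2| = iota u2 by rewrite ger0_norm ?(ltW p2).
have v12 : ln `|iota ((1%g : gal_of {:L}) u2)| = a2 by rewrite gal_id nu2.
have vh22 : ln `|iota (h2 u2)| = a2 by rewrite fix2 nu2.
have nu3 : `|iota u3| = iota u3 by rewrite ger0_norm ?(ltW p3).
have v13 : ln `|iota ((1%g : gal_of {:L}) u3)| = a3 by rewrite gal_id nu3.
have vh33 : ln `|iota (h3 u3)| = a3 by rewrite fix3 nu3.
have vh21 : ln `|iota (h2 u1)| = - a1.
  by rewrite (ln_unit_conj Lgal iota m123 fix1 s2 p12 p21 p23 u10 iu1 iu1i) nu1.
have vh31 : ln `|iota (h3 u1)| = - a1.
  by rewrite (ln_unit_conj Lgal iota m132 fix1 s3 p13 p31 p32 u10 iu1 iu1i) nu1.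
have vh12 : ln `|iota (h1 u2)| = - a2.
  by rewrite (ln_unit_conj Lgal iota m213 fix2 s1 p21 p12 p13 u20 iu2 iu2i) nu2.
have vh32 : ln `|iota (h3 u2)| = - a2.
  by rewrite (ln_unit_conj Lgal iota m231 fix2 s3 p23 p32 p31 u20 iu2 iu2i) nu2.
have vh13 : ln `|iota (h1 u3)| = - a3.
  by rewrite (ln_unit_conj Lgal iota m312 fix3 s1 p31 p13 p12 u30 iu3 iu3i) nu3.
have vh23 : ln `|iota (h2 u3)| = - a3.
  by rewrite (ln_unit_conj Lgal iota m321 fix3 s2 p32 p23 p21 u30 iu3 iu3i) nu3.
have [G hG] := boolp.choice (fun j => emb_gal iota Lgal Gal22 (tau j)).
have Ginj : injective G.
  move=> i j e; apply/eqP; apply: contraT => ne; have [x] := tau_inj i j ne.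
  by rewrite !hG e eqxx.
have Gbij : bijective G.
  apply: (@inj_card_bij _ _ G Ginj).
  have sub : [set: gal_of {:L}] \subset G @: [set: 'I_n].
    apply/fintype.subsetP => g _; have [j hj] := tau_all (iota \o (g : {rmorphism L -> L})).
    apply/imsetP; exists j => //; apply: (gal_inj_z (iota := iota) Lgal).
    by rewrite -hG -hj.
  rewrite -cardsT; apply: leq_trans (subset_leq_card sub) _.
  by apply: leq_trans (leq_imset_card _ _) _; rewrite cardsT.
match goal with |- ?A /\ _ => have part1 : A end.
  move=> n1 n2 n3 w.
  set N1 : R := n1%:~R; set N2 : R := n2%:~R; set N3 : R := n3%:~R.
  set V := fun g : gal_of {:L} => (ln `|iota (g u1)|, ln `|iota (g u2)|, ln `|iota (g u3)|).
  have wE : forall i j, w i j = Phi0 N1 N2 N3 (V (G i)) (V (G j)).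
    by move=> i j; rewrite /w /wedge /LOG !hG.
  have anti : forall i j, w j i = - w i j by move=> i j; rewrite !wE /Phi0 /=; ring.
  have A := arith a1 a2 a3 N1 N2 N3.
  rewrite /= !big_cons !big_nil in A.
  have key := wnorm1_sym anti.
  have S : \sum_i \sum_j `|w i j| = 8 * (Num.max `|N2 * (a1 * a3)| `|N3 * (a1 * a2)|
         + Num.max `|N1 * (a2 * a3)| `|N2 * (a1 * a3)|
         + Num.max `|N1 * (a2 * a3)| `|N3 * (a1 * a2)|).
    under eq_bigr => i _ do under eq_bigr => j _ do rewrite wE.
    rewrite (reindex2 (fun x y => `|Phi0 N1 N2 N3 (V x) (V y)|) Gbij).
    rewrite (sum_enum4 _ us all4).
    under eq_bigr => x _ do rewrite (sum_enum4 _ us all4).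
    rewrite !big_cons !big_nil /V; cbv beta.
    rewrite v11 v12 v13 vh11 vh12 vh13 vh21 vh22 vh23 vh31 vh32 vh33.
    exact: A.
  rewrite S in key.
  have e := half_eq _ _ _ key.
  rewrite /X1 /X2 /X3 -/a1 -/a2 -/a3 e; split => //.
  exact: max_ineq.
split => //.
move=> w hw nz.
have [m1 [m2 [m3 ew]]] := decomp u10 u20 u30 hw.
have := part1 m1 m2 m3; move=> /= [_ h8].
rewrite ew; apply: le_trans h8.
rewrite /X1 /X2 /X3 -/a1 -/a2 -/a3.
have a2p : 0 < a2 by apply: lt_trans a12.
have a3p : 0 < a3 by apply: lt_trans a23.
have hX1 : a1 * a2 <= a2 * a3 by rewrite mulrC ler_pM2l // ltW // (lt_trans a12).
have hX2 : a1 * a2 <= a1 * a3 by rewrite ler_pM2l // ltW.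
rewrite ler_pM2l //.
case: (eqVneq m1 0) => [e1|ne1]; last first.
  apply: le_trans hX1 _; rewrite le_max; apply/orP; left.
  by apply: int_ge => //; rewrite mulr_ge0 // ltW.
case: (eqVneq m2 0) => [e2|ne2]; last first.
  apply: le_trans hX2 _; rewrite le_max; apply/orP; right; rewrite le_max; apply/orP; left.
  by apply: int_ge => //; rewrite mulr_ge0 // ltW.
case: (eqVneq m3 0) => [e3|ne3]; last first.
  rewrite le_max; apply/orP; right; rewrite le_max; apply/orP; right.
  by apply: int_ge => //; rewrite mulr_ge0 // ltW.
exfalso; apply: nz; rewrite ew e1 e2 e3.
by apply/funext => i; apply/funext => j; rewrite !mulr0z !mul0r !addr0.
Qed.
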